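(* Let $X$ be a vector field on $\mathbb{S}^1$ for which $\mathcal{E}_X^\pm$ is defined, let $A\in\mathrm{O}_0(1,2)$ and $v\in\mathbb{R}^{1,2}$. Then $\mathcal{E}^\pm_{A_*X+\Lambda(v)}=A_*\mathcal{E}^\pm_X+\mathcal{E}^\pm_{\Lambda(v)}$.
   Context: $\mathbb{R}^{1,2}$ is $\mathbb{R}^3$ with $\langle x,y\rangle=-x_0y_0+x_1y_1+x_2y_2$; $\mathrm{O}_0(1,2)$ is the identity component of its linear isometry group, acting on $\overline{\mathbb{D}^2}$ by $A\cdot\eta=\Pi(A(1,\eta))$, $\Pi(x_0,x_1,x_2)=(x_1/x_0,x_2/x_0)$; $A_*$ denotes pushforward of vector fields by $\eta\mapsto A\cdot\eta$ (on $\mathbb{S}^1$ or $\mathbb{D}^2$). Minkowski cross product: $\langle x\boxtimes y,u\rangle=\det(x,y,u)$. $\Lambda(v)$ is the Killing field $\eta\mapsto\mathrm{d}_{(1,\eta)}\Pi((1,\eta)\boxtimes v)$ (also on $\mathbb{S}^1$). A vector field $X$ on $\mathbb{S}^1$ is $X(z)=iz\phi_X(z)$. $\phi_X^-(\eta)=\sup\{a(\eta):a\text{ affine},a|_{\mathbb{S}^1}\le\phi_X\}$, $\phi_X^+(\eta)=\inf\{a(\eta):a\text{ affine},a|_{\mathbb{S}^1}\ge\phi_X\}$. $\Sigma^-(\eta)$ is the set of $\sigma$ with $\langle(1,\xi),\sigma\rangle\le\phi_X^-(\xi)$ for all $\xi\in\mathbb{D}^2$ and equality at $\eta$; $\Sigma^+(\eta)$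 likewise with $\ge\phi^+_X$. $\mathcal{E}_X^\pm$ is defined when each $\Sigma^\pm(\eta)$, $\eta\in\mathbb{D}^2$, is a single point or a compact segment (this holds e.g. when $\phi_X$ is lower semicontinuous for $\mathcal{E}_X^-$, upper semicontinuous for $\mathcal{E}_X^+$), and then $\mathcal{E}_X^\pm(\eta)=\mathrm{d}_{(1,\eta)}\Pi((1,\eta)\boxtimes\sigma^\pm(\eta))$ with $\sigma^\pm(\eta)$ that point or the midpoint of that segment. *)

(* Defs.v *)
From HB Require Import structures.
From mathcomp Require Import all_boot all_order all_algebra.
From mathcomp Require Import all_classical all_reals ereal.
Set Implicit Arguments. Unset Strict Implicit. Unset Printing Implicit Defensive.
Import Order.TTheory GRing.Theory Num.Theory.
Local Open Scope ring_scope.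
Local Open Scope classical_set_scope.

Section Defs.
Variable R : realType.

Definition v3 (a b c : R) : 'cV[R]_3 := \col_(i < 3) [:: a; b; c]`_i.
Definition x0 (x : 'cV[R]_3) : R := x (inord 0) ord0.
Definition x1 (x : 'cV[R]_3) : R := x (inord 1) ord0.
Definition x2 (x : 'cV[R]_3) : R := x (inord 2) ord0.

Definition mink (x y : 'cV[R]_3) : R := - x0 x * x0 y + x1 x * x1 y + x2 x * x2 y.

Definition mink_isometry (A : 'M[R]_3) : Prop :=
  forall x y, mink (A *m x) (A *m y) = mink x y.
(* identity component O_0(1,2) = SO^+(1,2): det 1 and time-orientation preserving *)
Definition O0 (A : 'M[R]_3) : Prop :=
  mink_isometry A /\ \det A = 1 /\ 0 < A (inord 0) (inord 0).

Definition S1 (z : R * R) : Prop := z.1 ^+ 2 + z.2 ^+ 2 = 1.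
Definition D2 (z : R * R) : Prop := z.1 ^+ 2 + z.2 ^+ 2 < 1.

Definition add2 (p q : R * R) : R * R := (p.1 + q.1, p.2 + q.2).

(* Pi(x0,x1,x2) = (x1/x0, x2/x0) and its differential (Jacobian) at x applied to w *)
Definition Pi (x : 'cV[R]_3) : R * R := (x1 x / x0 x, x2 x / x0 x).
Definition dPi (x w : 'cV[R]_3) : R * R :=
  (x1 w / x0 x - x1 x * x0 w / (x0 x) ^+ 2, x2 w / x0 x - x2 x * x0 w / (x0 x) ^+ 2).

Definition lift (eta : R * R) : 'cV[R]_3 := v3 1 eta.1 eta.2.

(* projective action A . eta = Pi(A(1,eta)) and its differential at eta applied to u *)
Definition act (A : 'M[R]_3) (eta : R * R) : R * R := Pi (A *m lift eta).
Definition dact (A : 'M[R]_3) (eta u : R * R) : R * R :=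
  dPi (A *m lift eta) (A *m v3 0 u.1 u.2).

Definition push (A : 'M[R]_3) (Y : R * R -> R * R) (eta : R * R) : R * R :=
  let e := act (invmx A) eta in dact A e (Y e).

(* Minkowski cross product: <x ⊠ y, u> = det(x,y,u) *)
Definition mcross (x y : 'cV[R]_3) : 'cV[R]_3 :=
  v3 (- (x1 x * x2 y - x2 x * x1 y)) (x2 x * x0 y - x0 x * x2 y)
     (x0 x * x1 y - x1 x * x0 y).

Definition Lambda (v : 'cV[R]_3) (eta : R * R) : R * R :=
  dPi (lift eta) (mcross (lift eta) v).

(* vector field X(z) = i z phi(z) on S^1, and conversely the coefficient phi_X *)
Definition vf_of_phi (phi : R * R -> R) (z : R * R) : R * R :=
  (- z.2 * phi z, z.1 * phi z).
Definition phi_of (Y : R * R -> R * R) (z : R * R) : R :=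
  - z.2 * (Y z).1 + z.1 * (Y z).2.

Definition aff (c : R * R * R) (xi : R * R) : R := c.1.1 + c.1.2 * xi.1 + c.2 * xi.2.

Definition phi_minus (phi : R * R -> R) (eta : R * R) : \bar R :=
  ereal_sup [set (aff c eta)%:E | c in [set c | forall z, S1 z -> aff c z <= phi z]].
Definition phi_plus (phi : R * R -> R) (eta : R * R) : \bar R :=
  ereal_inf [set (aff c eta)%:E | c in [set c | forall z, S1 z -> phi z <= aff c z]].

Definition phi_pm (s : bool) phi := if s then phi_plus phi else phi_minus phi.

Definition Sigma (s : bool) (phi : R * R -> R) (eta : R * R) : set 'cV[R]_3 :=
  [set sg | (forall xi, D2 xi ->
               if s then (phi_plus phi xi <= (mink (lift xi) sg)%:E)%E
               else ((mink (lift xi) sg)%:E <= phi_minus phi xi)%E)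
            /\ (mink (lift eta) sg)%:E = phi_pm s phi eta].

Definition segment (p q : 'cV[R]_3) : set 'cV[R]_3 :=
  [set (1 - t) *: p + t *: q | t in [set t : R | 0 <= t <= 1]].

Definition E_defined (s : bool) (phi : R * R -> R) : Prop :=
  forall eta, D2 eta -> exists p q, Sigma s phi eta = segment p q.

Definition sigma_mid (s : bool) (phi : R * R -> R) (eta : R * R) : 'cV[R]_3 :=
  xget 0 [set m | exists p q, Sigma s phi eta = segment p q /\ m = 2^-1 *: (p + q)].

Definition E (s : bool) (phi : R * R -> R) (eta : R * R) : R * R :=
  dPi (lift eta) (mcross (lift eta) (sigma_mid s phi eta)).

End Defs.

(* Main.v *)
Require Import Defs.
From HB Require Import structures.
From mathcomp Require Import all_boot all_order all_algebra.
From mathcomp Require Import all_classical all_reals ereal.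
From mathcomp Require Import ring lra.
Import Order.TTheory GRing.Theory Num.Theory.
Local Open Scope ring_scope.

Lemma det3o (R : comNzRingType) (M : 'M[R]_3) :
  \det M = M 0 0 * (M 1 1 * M 2 2 - M 1 2 * M 2 1)
         - M 0 1 * (M 1 0 * M 2 2 - M 1 2 * M 2 0)
         + M 0 2 * (M 1 0 * M 2 1 - M 1 1 * M 2 0).
Proof.
rewrite (expand_det_row _ 0) !big_ord_recr big_ord0 /=.
rewrite /cofactor.
rewrite !(expand_det_row _ 0) !big_ord_recr !big_ord0 /=.
rewrite /cofactor !det_mx11 !mxE /=.
pose g (a b : nat) := M (inord a) (inord b).
have E : forall i j : 'I_3, M i j = g i j by move=> i j; rewrite /g !inord_val.
rewrite !E /= /g.
rewrite !expr0 !expr1 !expr2.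
ring.
Qed.

Lemma det3 (R : comNzRingType) (M : 'M[R]_3) :
  \det M = M (inord 0) (inord 0) * (M (inord 1) (inord 1) * M (inord 2) (inord 2) - M (inord 1) (inord 2) * M (inord 2) (inord 1))
         - M (inord 0) (inord 1) * (M (inord 1) (inord 0) * M (inord 2) (inord 2) - M (inord 1) (inord 2) * M (inord 2) (inord 0))
         + M (inord 0) (inord 2) * (M (inord 1) (inord 0) * M (inord 2) (inord 1) - M (inord 1) (inord 1) * M (inord 2) (inord 0)).
Proof.
have h0 : (inord 0 : 'I_3) = 0 by apply/val_inj; rewrite /= inordK.
have h1 : (inord 1 : 'I_3) = 1 by apply/val_inj; rewrite /= inordK.
have h2 : (inord 2 : 'I_3) = 2 by apply/val_inj; rewrite /= inordK.
by rewrite h0 h1 h2 det3o.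
Qed.

Section H.
Variable R : realType.
Local Notation V := 'cV[R]_3.

Lemma x0_v3 (a b c : R) : x0 (v3 a b c) = a.
Proof. by rewrite /x0 /v3 mxE inordK. Qed.
Lemma x1_v3 (a b c : R) : x1 (v3 a b c) = b.
Proof. by rewrite /x1 /v3 mxE inordK. Qed.
Lemma x2_v3 (a b c : R) : x2 (v3 a b c) = c.
Proof. by rewrite /x2 /v3 mxE inordK. Qed.

Lemma vecP (x y : V) : x0 x = x0 y -> x1 x = x1 y -> x2 x = x2 y -> x = y.
Proof.
move=> h0 h1 h2; apply/matrixP => i j; rewrite (ord1 j).
case: i => [[|[|[|k]]] Hi] //.
- by have -> : Ordinal Hi = inord 0 by apply/val_inj; rewrite /= inordK.
- by have -> : Ordinal Hi = inord 1 by apply/val_inj; rewrite /= inordK.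
- by have -> : Ordinal Hi = inord 2 by apply/val_inj; rewrite /= inordK.
Qed.

Lemma x0D (x y : V) : x0 (x + y) = x0 x + x0 y. Proof. by rewrite /x0 mxE. Qed.
Lemma x1D (x y : V) : x1 (x + y) = x1 x + x1 y. Proof. by rewrite /x1 mxE. Qed.
Lemma x2D (x y : V) : x2 (x + y) = x2 x + x2 y. Proof. by rewrite /x2 mxE. Qed.
Lemma x0Z a (x : V) : x0 (a *: x) = a * x0 x. Proof. by rewrite /x0 mxE. Qed.
Lemma x1Z a (x : V) : x1 (a *: x) = a * x1 x. Proof. by rewrite /x1 mxE. Qed.
Lemma x2Z a (x : V) : x2 (a *: x) = a * x2 x. Proof. by rewrite /x2 mxE. Qed.
Lemma x0N (x : V) : x0 (- x) = - x0 x. Proof. by rewrite /x0 mxE. Qed.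
Lemma x1N (x : V) : x1 (- x) = - x1 x. Proof. by rewrite /x1 mxE. Qed.
Lemma x2N (x : V) : x2 (- x) = - x2 x. Proof. by rewrite /x2 mxE. Qed.
Lemma x00 : x0 (0 : V) = 0. Proof. by rewrite /x0 mxE. Qed.
Lemma x10 : x1 (0 : V) = 0. Proof. by rewrite /x1 mxE. Qed.
Lemma x20 : x2 (0 : V) = 0. Proof. by rewrite /x2 mxE. Qed.

Definition crd := (x0D, x1D, x2D, x0Z, x1Z, x2Z, x0N, x1N, x2N, x00, x10, x20,
  x0_v3, x1_v3, x2_v3).

Lemma minkC (x y : V) : mink x y = mink y x.
Proof. rewrite /mink; ring. Qed.
Lemma minkDr (x y z : V) : mink x (y + z) = mink x y + mink x z.
Proof. rewrite /mink !crd; ring. Qed.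
Lemma minkDl (x y z : V) : mink (y + z) x = mink y x + mink z x.
Proof. rewrite /mink !crd; ring. Qed.
Lemma minkZr a (x y : V) : mink x (a *: y) = a * mink x y.
Proof. rewrite /mink !crd; ring. Qed.
Lemma minkZl a (x y : V) : mink (a *: y) x = a * mink y x.
Proof. rewrite /mink !crd; ring. Qed.
Lemma minkNr (x y : V) : mink x (- y) = - mink x y.
Proof. rewrite /mink !crd; ring. Qed.
Lemma minkNl (x y : V) : mink (- y) x = - mink y x.
Proof. rewrite /mink !crd; ring. Qed.
Lemma minkBr (x y z : V) : mink x (y - z) = mink x y - mink x z.
Proof. by rewrite minkDr minkNr. Qed.

Lemma mink_nondeg (d : V) : (forall w, mink d w = 0) -> d = 0.
Proof.
move=> h; have h0 := h (v3 1 0 0); have h1 := h (v3 0 1 0); have h2 := h (v3 0 0 1).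
move: h0 h1 h2; rewrite /mink !crd => h0 h1 h2.
apply: vecP; rewrite !crd; lra.
Qed.

Definition cols3 (x y u : V) : 'M[R]_3 :=
  \matrix_(i < 3, j < 3) (if j == 0 :> nat then x i ord0 else
                          if j == 1 :> nat then y i ord0 else u i ord0).

Lemma mink_mcross (x y u : V) : mink (mcross x y) u = \det (cols3 x y u).
Proof.
rewrite det3 !mxE !inordK // /=.
rewrite /mink /mcross !crd /x0 /x1 /x2; ring.
Qed.

Lemma mul_cols3 (B : 'M[R]_3) x y u :
  B *m cols3 x y u = cols3 (B *m x) (B *m y) (B *m u).
Proof.
apply/matrixP => i j; rewrite !mxE.
case: j => [[|[|[|k]]] Hj] //=; by apply: eq_bigr => k _; rewrite mxE.
Qed.

Lemma mcross_equiv (B : 'M[R]_3) x y :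
  mink_isometry B -> \det B = 1 ->
  B *m mcross x y = mcross (B *m x) (B *m y).
Proof.
move=> iso dB.
have Bu : B \in unitmx by rewrite unitmxE dB unitr1.
apply/eqP; rewrite -subr_eq0; apply/eqP; apply: mink_nondeg => w.
have -> : w = B *m (invmx B *m w) by rewrite mulmxA mulmxV // mul1mx.
set u := invmx B *m w.
rewrite minkDl minkNl iso !mink_mcross -mul_cols3 det_mulmx dB mul1r; ring.
Qed.

End H.

Set Implicit Arguments. Unset Strict Implicit. Unset Printing Implicit Defensive.

Section H2.
Variable R : realType.
Local Notation V := 'cV[R]_3.
Local Notation lift := Defs.lift.

Definition e0 : V := v3 1 0 0.
Definition Lor (B : 'M[R]_3) := mink_isometry B /\ B \in unitmx /\ 0 < x0 (B *m e0).

Lemma x0_lift (xi : R * R) : x0 (lift xi) = 1. Proof. by rewrite /Defs.lift crd. Qed.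
Lemma x1_lift (xi : R * R) : x1 (lift xi) = xi.1. Proof. by rewrite /Defs.lift crd. Qed.
Lemma x2_lift (xi : R * R) : x2 (lift xi) = xi.2. Proof. by rewrite /Defs.lift crd. Qed.
Definition crdl := (x0_lift, x1_lift, x2_lift).

Lemma O0_Lor A : O0 A -> Lor A.
Proof.
move=> [iso [dA pA]]; split => //; split; first by rewrite unitmxE dA unitr1.
suff -> : x0 (A *m e0) = A (inord 0) (inord 0) by [].
rewrite /x0 mxE !big_ord_recr big_ord0 /= !mxE /= !mulr0 !addr0 add0r mulr1.
by congr (A _ _); apply/val_inj; rewrite /= inordK.
Qed.

Lemma Lor1 : Lor 1.
Proof.
split; first by move=> x y; rewrite !mul1mx.
by split; [exact: unitmx1 | rewrite mul1mx /e0 crd].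
Qed.

Lemma Lor_inv A : Lor A -> Lor (invmx A).
Proof.
move=> [iso [uA pA]]; split.
  move=> x y; rewrite -iso !mulmxA !mulmxV // !mul1mx //.
split; first by rewrite unitmx_inv.
have h : mink (A *m (invmx A *m e0)) (A *m e0) = mink e0 (A *m e0)
  by rewrite mulmxA mulmxV // mul1mx.
rewrite iso /mink /e0 !crd in h.
lra.
Qed.

Lemma Lor_pos B (xi : R * R) : Lor B -> xi.1 ^+ 2 + xi.2 ^+ 2 <= 1 ->
  0 < x0 (B *m lift xi).
Proof.
move=> [iso [uB pB]] hxi.
have hy := iso e0 e0; have hx := iso (lift xi) (lift xi); have hxy := iso (lift xi) e0.
move: hy hx hxy pB; rewrite {2}/mink {3}/mink {4}/mink /e0 /Defs.lift !crd.
rewrite /mink.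
set y0 := x0 (B *m _); set y1 := x1 (B *m _); set y2 := x2 (B *m _).
set z0 := x0 (B *m _); set z1 := x1 (B *m _); set z2 := x2 (B *m _).
move=> hy hx hxy py.
have cs : (z1 * y1 + z2 * y2) ^+ 2 <= (z1 ^+ 2 + z2 ^+ 2) * (y1 ^+ 2 + y2 ^+ 2).
  have : 0 <= (z1 * y2 - z2 * y1) ^+ 2 by apply: sqr_ge0.
  lra.
rewrite ltNge; apply/negP => hz.
have hw : z1 * y1 + z2 * y2 = z0 * y0 - 1 by lra.
have hzz : z1 ^+ 2 + z2 ^+ 2 <= z0 ^+ 2 by rewrite !expr2; nra.
have hyy : y1 ^+ 2 + y2 ^+ 2 = y0 ^+ 2 - 1 by rewrite !expr2; lra.
have hy0 : 0 <= y0 ^+ 2 - 1 by rewrite -hyy; nra.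
have : (z0 * y0 - 1) ^+ 2 <= z0 ^+ 2 * (y0 ^+ 2 - 1).
  rewrite -hw -hyy; apply: (le_trans cs); apply: ler_wpM2r; rewrite ?hyy //.
have : z0 * y0 <= 0 by nra.
rewrite !expr2; nra.
Qed.


Lemma liftPi (x : V) : x0 x != 0 -> x = x0 x *: lift (Pi x).
Proof.
move=> h; apply: vecP; rewrite /Pi /Defs.lift !crd /=; first by rewrite mulr1.
  by rewrite mulrC divfK.
by rewrite mulrC divfK.
Qed.

Lemma PiZ a (x : V) : a != 0 -> Pi (a *: x) = Pi x.
Proof.
move=> ha; rewrite /Pi !crd; congr pair; rewrite invfM mulrACA divff // mul1r //.
Qed.

Lemma Pi_lift (xi : R * R) : Pi (lift xi) = xi.
Proof. by rewrite /Pi !crdl !divr1; case: xi. Qed.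

Lemma act1 (xi : R * R) : act 1 xi = xi.
Proof. by rewrite /act mul1mx Pi_lift. Qed.

Lemma mink_lift (xi : R * R) : mink (lift xi) (lift xi) = -1 + xi.1 ^+ 2 + xi.2 ^+ 2.
Proof. rewrite /mink !crdl; rewrite !expr2; ring. Qed.

Lemma act_norm B (xi : R * R) : Lor B -> xi.1 ^+ 2 + xi.2 ^+ 2 <= 1 ->
  (act B xi).1 ^+ 2 + (act B xi).2 ^+ 2 - 1
  = (-1 + xi.1 ^+ 2 + xi.2 ^+ 2) / (x0 (B *m lift xi)) ^+ 2.
Proof.
move=> LB hxi; have p := Lor_pos LB hxi.
have [iso _] := LB.
rewrite -mink_lift -iso /act /Pi /mink /=.
field; by rewrite gt_eqF.
Qed.

Lemma act_D2 B (xi : R * R) : Lor B -> D2 xi -> D2 (act B xi).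
Proof.
move=> LB hxi; rewrite /D2 in hxi *.
have h := act_norm LB (ltW hxi).
have p := Lor_pos LB (ltW hxi).
rewrite -subr_lt0 h pmulr_llt0; first lra.
by rewrite invr_gt0 exprn_gt0.
Qed.

Lemma act_S1 B (xi : R * R) : Lor B -> S1 xi -> S1 (act B xi).
Proof.
move=> LB hxi; rewrite /S1 in hxi *.
have hle : xi.1 ^+ 2 + xi.2 ^+ 2 <= 1 by rewrite hxi.
have h := act_norm LB hle.
apply/eqP; rewrite -subr_eq0 h.
have -> : -1 + xi.1 ^+ 2 + xi.2 ^+ 2 = 0 by lra.
by rewrite mul0r.
Qed.

Lemma act_comp B C (xi : R * R) : Lor C -> xi.1 ^+ 2 + xi.2 ^+ 2 <= 1 ->
  act B (act C xi) = act (B *m C) xi.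
Proof.
move=> LC hxi; have p := Lor_pos LC hxi.
rewrite /act.
have e := liftPi (lt0r_neq0 p).
have -> : lift (Pi (C *m lift xi)) = (x0 (C *m lift xi))^-1 *: (C *m lift xi).
  by rewrite [X in _ = _ *: X]e scalerA mulVf ?lt0r_neq0 // scale1r.
by rewrite -scalemxAr PiZ ?invr_eq0 ?gt_eqF // mulmxA.
Qed.

Lemma act_inv A (xi : R * R) : Lor A -> xi.1 ^+ 2 + xi.2 ^+ 2 <= 1 ->
  act A (act (invmx A) xi) = xi.
Proof.
move=> LA hxi; have [_ [uA _]] := LA.
by rewrite act_comp ?mulmxV // ?act1 //; apply: Lor_inv.
Qed.

Lemma act_inv' A (xi : R * R) : Lor A -> xi.1 ^+ 2 + xi.2 ^+ 2 <= 1 ->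
  act (invmx A) (act A xi) = xi.
Proof.
move=> LA hxi; have [_ [uA _]] := LA.
by rewrite act_comp ?mulVmx // ?act1.
Qed.

Lemma mcrossZl a (x y : V) : mcross (a *: x) y = a *: mcross x y.
Proof. apply: vecP; rewrite /mcross !crd; ring. Qed.
Lemma mcrossDr (x y z : V) : mcross x (y + z) = mcross x y + mcross x z.
Proof. apply: vecP; rewrite /mcross !crd; ring. Qed.

Lemma Lambda_add (s v : V) (eta : R * R) :
  Lambda (s + v) eta = add2 (Lambda s eta) (Lambda v eta).
Proof.
rewrite /Lambda /dPi /add2 !crdl !divr1 !expr1n !divr1 mcrossDr !crd /=.
congr pair; ring.
Qed.

Lemma push_Lambda (B : 'M[R]_3) (tau : V) (e : R * R) :
  mink_isometry B -> \det B = 1 -> x0 (B *m lift e) != 0 ->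
  dact B e (Lambda tau e) = Lambda (B *m tau) (act B e).
Proof.
move=> iso dB hne.
rewrite /dact /Lambda /act.
set w := mcross (lift e) tau.
set mu := x0 (B *m lift e).
set eta := Pi (B *m lift e).
have hv : v3 0 (dPi (lift e) w).1 (dPi (lift e) w).2 = w - x0 w *: lift e.
  apply: vecP; rewrite /dPi !crd /= ?divr1 ?expr1n ?divr1; ring.
have hl : B *m lift e = mu *: lift eta by apply: liftPi.
have hw : B *m w = mu *: mcross (lift eta) (B *m tau).
  by rewrite /w mcross_equiv // hl mcrossZl.
rewrite hv mulmxBr -scalemxAr hw hl scalerA.
rewrite /dPi !crd ?crdl ?expr1n ?divr1.
congr pair; field; exact: hne.
Qed.

End H2.

Section H3.
Variable R : realType.
Local Notation V := 'cV[R]_3.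
Local Notation lift := Defs.lift.

Definition sg (s : bool) : R := if s then -1 else 1.
Definition adm s (phi : R * R -> R) (sig : V) :=
  forall z, S1 z -> sg s * mink (lift z) sig <= sg s * phi z.
Definition Pd s (phi : R * R -> R) (xi : R * R) (x : R) :=
  forall y, y < sg s * x -> exists sig, adm s phi sig /\ y < sg s * mink (lift xi) sig.
Definition Qd s (phi : R * R -> R) (xi : R * R) (x : R) :=
  forall sig, adm s phi sig -> sg s * mink (lift xi) sig <= sg s * x.

Definition sigc (c : R * R * R) : V := v3 (- c.1.1) c.1.2 c.2.
Definition csig (sig : V) : R * R * R := ((- x0 sig, x1 sig), x2 sig).

Lemma aff_mink c (xi : R * R) : aff c xi = mink (lift xi) (sigc c).
Proof. rewrite /aff /mink /sigc !crd ?crdl; ring. Qed.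
Lemma mink_aff (sig : V) (xi : R * R) : mink (lift xi) sig = aff (csig sig) xi.
Proof. rewrite /aff /mink /csig ?crdl /=; ring. Qed.

Lemma minus_le phi (xi : R * R) x :
  (x%:E <= phi_minus phi xi)%E <-> Pd false phi xi x.
Proof.
rewrite /Pd /adm /sg; split.
- move=> h y; rewrite mul1r => hy.
  have : (y%:E < phi_minus phi xi)%E by apply: (lt_le_trans _ h); rewrite lte_fin.
  move/ereal_sup_gt => [_ [c hc <-]]; rewrite lte_fin => hyc.
  exists (sigc c); split; last by rewrite mul1r -aff_mink.
  by move=> z hz; rewrite !mul1r -aff_mink; apply: hc.
- move=> h.
  have key : forall y, y < x -> (y%:E < phi_minus phi xi)%E.
    move=> y hy; case: (h y); first by rewrite mul1r.
    move=> sig [hs hys].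
    apply: (lt_le_trans (_ : y%:E < (mink (lift xi) sig)%:E)%E).
      by rewrite lte_fin -(mul1r (mink _ _)).
    apply: ereal_sup_ubound; exists (csig sig); last by rewrite mink_aff.
    move=> z hz; rewrite -mink_aff; have := hs z hz; by rewrite !mul1r.
  move: (phi_minus phi xi) key => S key.
  rewrite leNgt; apply/negP => hlt.
  case: S key hlt => [r| |] key hlt.
  + rewrite lte_fin in hlt.
    have : (r + x) / 2 < x by lra.
    move/key; rewrite lte_fin; lra.
  + by [].
  + have : x - 1 < x by lra.
    by move/key.
Qed.

Lemma minus_ge phi (xi : R * R) x :
  (phi_minus phi xi <= x%:E)%E <-> Qd false phi xi x.
Proof.
rewrite /Qd /adm /sg; split.
- move=> h sig hs; rewrite !mul1r -lee_fin; apply: le_trans h.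
  apply: ereal_sup_ubound; exists (csig sig); last by rewrite mink_aff.
  move=> z hz; rewrite -mink_aff; have := hs z hz; by rewrite !mul1r.
- move=> h; apply: ge_ereal_sup => _ [c hc <-]; rewrite lee_fin aff_mink.
  have := h (sigc c); rewrite !mul1r; apply.
  by move=> z hz; rewrite !mul1r -aff_mink; apply: hc.
Qed.

Lemma plus_le phi (xi : R * R) x :
  (phi_plus phi xi <= x%:E)%E <-> Pd true phi xi x.
Proof.
rewrite /Pd /adm /sg; split.
- move=> h y hy.
  have : (phi_plus phi xi < (- y)%:E)%E by apply: (le_lt_trans h); rewrite lte_fin; lra.
  move/ereal_inf_lt => [_ [c hc <-]]; rewrite lte_fin => hyc.
  exists (sigc c); split; last by rewrite -aff_mink; lra.
  by move=> z hz; rewrite -aff_mink; have := hc z hz; lra.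
- move=> h.
  have key : forall y, x < y -> (phi_plus phi xi < y%:E)%E.
    move=> y hy; case: (h (- y)); first by lra.
    move=> sig [hs hys].
    apply: (le_lt_trans (_ : phi_plus phi xi <= (mink (lift xi) sig)%:E)%E).
      apply: ereal_inf_lbound; exists (csig sig); last by rewrite mink_aff.
      move=> z hz; rewrite -mink_aff; have := hs z hz; lra.
    by rewrite lte_fin; lra.
  move: (phi_plus phi xi) key => S key.
  rewrite leNgt; apply/negP => hlt.
  case: S key hlt => [r| |] key hlt.
  + rewrite lte_fin in hlt.
    have : x < (r + x) / 2 by lra.
    move/key; rewrite lte_fin; lra.
  + have : x < x + 1 by lra.
    by move/key.
  + by [].
Qed.

Lemma plus_ge phi (xi : R * R) x :
  (x%:E <= phi_plus phi xi)%E <-> Qd true phi xi x.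
Proof.
rewrite /Qd /adm /sg; split.
- move=> h sig hs; suff : x <= mink (lift xi) sig by lra.
  rewrite -lee_fin; apply: (le_trans h).
  apply: ereal_inf_lbound; exists (csig sig); last by rewrite mink_aff.
  move=> z hz; rewrite -mink_aff; have := hs z hz; lra.
- move=> h; apply: le_ereal_inf_tmp => _ [c hc <-]; rewrite lee_fin aff_mink.
  have := h (sigc c); suff : adm true phi (sigc c) by rewrite /adm /sg => hh /(_ hh); lra.
  by move=> z hz; rewrite /sg -aff_mink; have := hc z hz; lra.
Qed.

Lemma Sigma_char s phi (eta : R * R) (sig : V) :
  Sigma s phi eta sig <->
  (forall xi, D2 xi -> Pd s phi xi (mink (lift xi) sig)) /\
  Pd s phi eta (mink (lift eta) sig) /\ Qd s phi eta (mink (lift eta) sig).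
Proof.
rewrite /Sigma /phi_pm /=; case: s.
- split.
  + move=> [h1 /eqP h2]; rewrite eq_le in h2; case/andP: h2 => h2 h3.
    split; first by move=> xi /h1; rewrite plus_le.
    by split; [rewrite -plus_le | rewrite -plus_ge].
  + move=> [h1 [h2 h3]]; split; first by move=> xi /h1; rewrite plus_le.
    apply/eqP; rewrite eq_le; apply/andP; split; [rewrite plus_ge // | rewrite plus_le //].
- split.
  + move=> [h1 /eqP h2]; rewrite eq_le in h2; case/andP: h2 => h2 h3.
    split; first by move=> xi /h1; rewrite minus_le.
    by split; [rewrite -minus_le | rewrite -minus_ge].
  + move=> [h1 [h2 h3]]; split; first by move=> xi /h1; rewrite minus_le.
    apply/eqP; rewrite eq_le; apply/andP; split; [rewrite minus_le // | rewrite minus_ge //].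
Qed.

End H3.

Arguments sg {R} s.
Local Open Scope classical_set_scope.


Section H4.
Variable R : realType.
Local Notation V := 'cV[R]_3.
Local Notation lift := Defs.lift.

Lemma cancel_le s (a nu p q : R) : 0 < nu ->
  (sg s * (a + nu * p) <= sg s * (a + nu * q)) = (sg s * p <= sg s * q).
Proof.
move=> hn; rewrite -subr_ge0.
have -> : sg s * (a + nu * q) - sg s * (a + nu * p) = nu * (sg s * q - sg s * p) by ring.
by rewrite pmulr_rge0 // subr_ge0.
Qed.

Lemma S1_disk (z : R * R) : S1 z -> z.1 ^+ 2 + z.2 ^+ 2 <= 1.
Proof. by rewrite /S1 => ->. Qed.
Lemma D2_disk (z : R * R) : D2 z -> z.1 ^+ 2 + z.2 ^+ 2 <= 1.
Proof. by rewrite /D2 => /ltW. Qed.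

Section Transfer.
Variables (A : 'M[R]_3) (v : V) (phi psi : R * R -> R).
Hypothesis LA : Lor A.
Let B := invmx A.
Hypothesis Hpsi : forall z, S1 z -> psi z = x0 (B *m lift z) * phi (act B z) + mink (lift z) v.

Let LB : Lor B := Lor_inv LA.

Lemma KI (xi : R * R) (sig : V) : xi.1 ^+ 2 + xi.2 ^+ 2 <= 1 ->
  mink (lift xi) sig = mink (lift xi) v +
    x0 (B *m lift xi) * mink (lift (act B xi)) (B *m (sig - v)).
Proof.
move=> hxi; have p := Lor_pos LB hxi; have [isoB _] := LB.
have -> : mink (lift xi) sig = mink (lift xi) v + mink (lift xi) (sig - v).
  by rewrite minkBr; ring.
rewrite -(isoB (lift xi) (sig - v)) {1}(liftPi (lt0r_neq0 p)) minkZl //.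
Qed.

Lemma adm_transfer s sig : adm s psi sig <-> adm s phi (B *m (sig - v)).
Proof.
have [_ [uA _]] := LA.
split.
- move=> h e he.
  have hz : S1 (act A e) by apply: act_S1.
  have := h _ hz; rewrite Hpsi // (KI _ (S1_disk hz)) act_inv' ?S1_disk //.
  rewrite [_ * phi e + _]addrC cancel_le //.
  by apply: Lor_pos LB (S1_disk hz).
- move=> h z hz.
  rewrite Hpsi // (KI _ (S1_disk hz)) [_ * phi _ + _]addrC cancel_le.
    by apply: h; apply: act_S1.
  by apply: Lor_pos LB (S1_disk hz).
Qed.

Lemma BA (tau : V) : B *m (A *m tau + v - v) = tau.
Proof. have [_ [uA _]] := LA; by rewrite addrK mulKmx. Qed.

Lemma Pd_transfer s (xi : R * R) sig : xi.1 ^+ 2 + xi.2 ^+ 2 <= 1 ->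
  Pd s psi xi (mink (lift xi) sig) <->
  Pd s phi (act B xi) (mink (lift (act B xi)) (B *m (sig - v))).
Proof.
move=> hxi; have nup := Lor_pos LB hxi.
set nu := x0 (B *m lift xi).
set a := mink (lift xi) v.
rewrite /Pd (KI sig hxi) -/nu -/a; split.
- move=> h y hy.
  have [tau [ht hyt]] : exists tau, adm s psi tau /\
      sg s * a + nu * y < sg s * mink (lift xi) tau.
    apply: h.
    have : nu * y < nu * (sg s * mink (lift (act B xi)) (B *m (sig - v))).
      by rewrite ltr_pM2l.
    lra.
  exists (B *m (tau - v)); split; first by rewrite -adm_transfer.
  move: hyt; rewrite (KI tau hxi) -/nu -/a => hyt.
  have : nu * y < nu * (sg s * mink (lift (act B xi)) (B *m (tau - v))) by lra.
  by rewrite ltr_pM2l.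
- move=> h y hy.
  set y' := (y - sg s * a) / nu.
  have ey : nu * y' = y - sg s * a by rewrite /y'; field; apply: lt0r_neq0.
  have hy' : y' < sg s * mink (lift (act B xi)) (B *m (sig - v)).
    rewrite -(ltr_pM2l nup) ey -/nu; lra.
  have [tau [ht hyt]] := h y' hy'.
  exists (A *m tau + v); split; first by rewrite adm_transfer BA.
  rewrite (KI _ hxi) BA -/nu -/a.
  have : nu * y' < nu * (sg s * mink (lift (act B xi)) tau) by rewrite ltr_pM2l.
  lra.
Qed.

Lemma Qd_transfer s (xi : R * R) sig : xi.1 ^+ 2 + xi.2 ^+ 2 <= 1 ->
  Qd s psi xi (mink (lift xi) sig) <->
  Qd s phi (act B xi) (mink (lift (act B xi)) (B *m (sig - v))).
Proof.
move=> hxi; have nup := Lor_pos LB hxi.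
rewrite /Qd; split.
- move=> h tau ht.
  have := h (A *m tau + v); rewrite adm_transfer BA => /(_ ht).
  by rewrite (KI _ hxi) (KI sig hxi) BA cancel_le.
- move=> h tau; rewrite adm_transfer => /h.
  by rewrite (KI tau hxi) (KI sig hxi) cancel_le.
Qed.

Lemma Sigma_transfer s (eta : R * R) : D2 eta ->
  Sigma s psi eta = [set A *m tau + v | tau in Sigma s phi (act B eta)].
Proof.
move=> heta; have [_ [uA _]] := LA.
have key : forall sig, Sigma s psi eta sig <-> Sigma s phi (act B eta) (B *m (sig - v)).
  move=> sig; rewrite !Sigma_char.
  rewrite -Pd_transfer ?D2_disk // -Qd_transfer ?D2_disk //.
  split; move=> [h1 h23]; split => // xi hxi.
  + have hxi' : D2 (act A xi) by apply: act_D2.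
    have := h1 _ hxi'; rewrite Pd_transfer ?D2_disk //.
    by rewrite act_inv' ?D2_disk.
  + by rewrite Pd_transfer ?D2_disk //; apply: h1; apply: act_D2.
apply/seteqP; split.
- move=> sig /key h; exists (B *m (sig - v)) => //.
  by rewrite /B mulKVmx // subrK.
- by move=> _ [tau ht <-]; apply/key; rewrite BA.
Qed.

End Transfer.

End H4.

Section H5.
Variable R : realType.
Local Notation V := 'cV[R]_3.
Local Notation lift := Defs.lift.

Lemma mink_liftE (xi : R * R) (s : V) :
  mink (lift xi) s = - x0 s + xi.1 * x1 s + xi.2 * x2 s.
Proof. rewrite /mink ?crdl; ring. Qed.

Lemma conv_le (tau : V) : (forall z, S1 z -> mink (lift z) tau <= 0) ->
  forall xi, D2 xi -> mink (lift xi) tau <= 0.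
Proof.
move=> h xi hxi; rewrite mink_liftE.
set a := x0 tau; set b := x1 tau; set c := x2 tau.
have hz := fun z hz => h z hz; move: hz; rewrite /S1.
move=> hz.
set r := Num.sqrt (b ^+ 2 + c ^+ 2).
have r0 : 0 <= r by apply: sqrtr_ge0.
have rr : r ^+ 2 = b ^+ 2 + c ^+ 2 by rewrite sqr_sqrtr // addr_ge0 // sqr_ge0.
move: hxi; rewrite /D2 => hxi.
have [rz | rp] := eqVneq r 0.
  have hb : b = 0 by move: rr; rewrite rz expr0n /= => /eqP; rewrite eq_sym paddr_eq0 ?sqr_ge0 // !sqrf_eq0 => /andP [/eqP -> _].
  have hc : c = 0 by move: rr; rewrite rz expr0n /= => /eqP; rewrite eq_sym paddr_eq0 ?sqr_ge0 // !sqrf_eq0 => /andP [_ /eqP ->].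
  have := hz (1, 0); rewrite mink_liftE /= -/a -/b -/c hb hc.
  have -> : (1 : R) ^+ 2 + 0 ^+ 2 = 1 by rewrite expr1n expr0n addr0.
  move=> /(_ erefl); lra.
have rpos : 0 < r by rewrite lt_neqAle eq_sym rp r0.
have := hz (b / r, c / r); rewrite mink_liftE /= -/a -/b -/c.
have -> : (b / r) ^+ 2 + (c / r) ^+ 2 = 1.
  by rewrite !expr_div_n -mulrDl -rr divff // expf_neq0.
move=> /(_ erefl).
have e : b / r * b + c / r * c = r.
  have -> : b / r * b + c / r * c = (b ^+ 2 + c ^+ 2) / r by rewrite !expr2; field.
  by rewrite -rr expr2 mulfK.
move=> har0.
have har : - a + r <= 0 by rewrite -e; lra.
have cs : (xi.1 * b + xi.2 * c) ^+ 2 <= (xi.1 ^+ 2 + xi.2 ^+ 2) * r ^+ 2.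
  rewrite rr; have : 0 <= (xi.1 * c - xi.2 * b) ^+ 2 by apply: sqr_ge0.
  rewrite !expr2; nra.
have : (xi.1 * b + xi.2 * c) ^+ 2 < r ^+ 2.
  apply: (le_lt_trans cs); rewrite -[X in _ < X]mul1r ltr_pM2r //.
  by rewrite exprn_gt0.
rewrite !expr2 => h2.
nra.
Qed.


Lemma mink0r (x : V) : mink x 0 = 0.
Proof. rewrite /mink !crd; ring. Qed.

Lemma adm0 s (sig : V) : adm s (fun _ => 0) sig ->
  forall xi, D2 xi -> sg s * mink (lift xi) sig <= 0.
Proof.
move=> h xi hxi; rewrite -minkZr; apply: conv_le => // z hz.
by rewrite minkZr; have := h z hz; rewrite mulr0.
Qed.

Lemma adm0_0 s : adm s (fun _ => 0) (0 : V).
Proof. by move=> z _; rewrite mink0r. Qed.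

Lemma Pd0 s (xi : R * R) x : D2 xi -> Pd s (fun _ => 0) xi x <-> sg s * x <= 0.
Proof.
move=> hxi; split.
- move=> h; rewrite leNgt; apply/negP => hx.
  have [sig [hs hy]] := h 0 hx.
  have := adm0 hs hxi; lra.
- move=> h y hy; exists 0; split; first exact: adm0_0.
  by rewrite mink0r mulr0; lra.
Qed.

Lemma Qd0 s (xi : R * R) x : D2 xi -> Qd s (fun _ => 0) xi x <-> 0 <= sg s * x.
Proof.
move=> hxi; split.
- by move=> /(_ 0 (adm0_0 s)); rewrite mink0r mulr0.
- move=> h sig hs; have := adm0 hs hxi; lra.
Qed.

Lemma D2_shift (a b e : R) : D2 (a, b) -> e = (1 - a ^+ 2 - b ^+ 2) / 4 ->
  0 < e /\ D2 (a + e, b) /\ D2 (a - e, b) /\ D2 (a, b + e) /\ D2 (a, b - e).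
Proof.
rewrite /D2 /= => h ee.
have e4 : 4 * e = 1 - a ^+ 2 - b ^+ 2 by rewrite ee; field.
have ep : 0 < e by lra.
have ha : a ^+ 2 < 1 by have := sqr_ge0 b; lra.
have hb : b ^+ 2 < 1 by have := sqr_ge0 a; lra.
have ha1 : a < 1 by rewrite expr2 in ha; nra.
have ha2 : -1 < a by rewrite expr2 in ha; nra.
have hb1 : b < 1 by rewrite expr2 in hb; nra.
have hb2 : -1 < b by rewrite expr2 in hb; nra.
have e1 : e < 1 by have := sqr_ge0 a; have := sqr_ge0 b; lra.
rewrite !expr2 in e4 h *.
split => //; split; [|split; [|split]]; nra.
Qed.

Lemma Sigma0 s (eta : R * R) : D2 eta -> Sigma s (fun _ => 0) eta = [set 0].
Proof.
move=> heta; apply/seteqP; split; last first.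
  move=> _ ->; rewrite Sigma_char mink0r; split; first by move=> xi hxi; rewrite Pd0 // mink0r mulr0.
  by rewrite Pd0 // Qd0 // mulr0.
move=> sig; rewrite Sigma_char => -[h1 [h2 h3]].
rewrite Pd0 // in h2; rewrite Qd0 // in h3.
have h1' : forall xi, D2 xi -> sg s * mink (lift xi) sig <= 0.
  by move=> xi hxi; have := h1 xi hxi; rewrite Pd0.
case: eta heta h2 h3 => a b heta h2 h3.
set e := (1 - a ^+ 2 - b ^+ 2) / 4.
have [ep [d1 [d2 [d3 d4]]]] := D2_shift heta (erefl e).
have := h1' _ d1; have := h1' _ d2; have := h1' _ d3; have := h1' _ d4.
move: h2 h3; rewrite !mink_liftE /=.
set a0 := x0 sig; set a1 := x1 sig; set a2 := x2 sig.
rewrite /sg; case: (s) => h2 h3 g4 g3 g2 g1.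
all: have ea1 : e * a1 = 0 by lra.
all: have ea2 : e * a2 = 0 by lra.
all: move/eqP: ea1; rewrite mulf_eq0 (gt_eqF ep) /= => /eqP z1.
all: move/eqP: ea2; rewrite mulf_eq0 (gt_eqF ep) /= => /eqP z2.
all: have z0 : a0 = 0 by rewrite z1 z2 in h2 h3; lra.
all: by apply: vecP; rewrite !crd.
Qed.

Lemma seg_pt (p : V) : segment p p = [set p].
Proof.
apply/seteqP; split.
- by move=> _ [t _ <-]; rewrite -scalerDl subrK scale1r.
- move=> _ ->; exists 0; first by rewrite /= lexx ler01.
  by rewrite subr0 scale1r scale0r addr0.
Qed.

Lemma seg_img (A : 'M[R]_3) (v p q : V) :
  [set A *m tau + v | tau in segment p q] = segment (A *m p + v) (A *m q + v).
Proof.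
have e : forall t : R, A *m ((1 - t) *: p + t *: q) + v =
    (1 - t) *: (A *m p + v) + t *: (A *m q + v).
  move=> t; rewrite mulmxDr -!scalemxAr !scalerDr addrACA -scalerDl subrK scale1r //.
apply/seteqP; split.
- by move=> _ [_ [t ht <-] <-]; exists t => //; rewrite e.
- by move=> _ [t ht <-]; exists ((1 - t) *: p + t *: q); [exists t | rewrite e].
Qed.

Lemma hull_real (a b a' t : R) : 0 <= t <= 1 -> a' = (1 - t) * a + t * b ->
  (a <= b -> a <= a' /\ a' <= b) /\ (b <= a -> b <= a' /\ a' <= a).
Proof. move=> /andP [t0 t1] ->; split => h; split; nra. Qed.

Lemma seg_mem (p q x : V) : segment p q x -> exists t : R, 0 <= t <= 1 /\
  x0 x = (1 - t) * x0 p + t * x0 q /\ x1 x = (1 - t) * x1 p + t * x1 q /\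
  x2 x = (1 - t) * x2 p + t * x2 q.
Proof. by move=> [t ht <-]; exists t; rewrite !crd. Qed.

Lemma seg_l (p q : V) : segment p q p.
Proof. by exists 0; [rewrite /= lexx ler01 | rewrite subr0 scale1r scale0r addr0]. Qed.
Lemma seg_r (p q : V) : segment p q q.
Proof. by exists 1; [rewrite /= lexx ler01 | rewrite subrr scale0r scale1r add0r]. Qed.

Lemma real_mid (a b a' b' : R) :
  (exists t, 0 <= t <= 1 /\ a' = (1 - t) * a + t * b) ->
  (exists t, 0 <= t <= 1 /\ b' = (1 - t) * a + t * b) ->
  (exists t, 0 <= t <= 1 /\ a = (1 - t) * a' + t * b') ->
  (exists t, 0 <= t <= 1 /\ b = (1 - t) * a' + t * b') ->
  a + b = a' + b'.
Proof.
move=> [t1 [h1 e1]] [t2 [h2 e2]] [t3 [h3 e3]] [t4 [h4 e4]].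
case: (lerP a b) => hab; case: (lerP a' b') => hab'.
all: have [k1 k2] := hull_real h1 e1; have [k3 k4] := hull_real h2 e2.
all: have [k5 k6] := hull_real h3 e3; have [k7 k8] := hull_real h4 e4.
- have := k1 hab; have := k3 hab; have := k5 hab'; have := k7 hab'; lra.
- have := k1 hab; have := k3 hab; have := k6 (ltW hab'); have := k8 (ltW hab'); lra.
- have := k2 (ltW hab); have := k4 (ltW hab); have := k5 hab'; have := k7 hab'; lra.
- have := k2 (ltW hab); have := k4 (ltW hab); have := k6 (ltW hab'); have := k8 (ltW hab'); lra.
Qed.

Lemma seg_mid (p q p' q' : V) : segment p q = segment p' q' -> p + q = p' + q'.
Proof.
move=> E.
have m1 : segment p q p' by rewrite E; apply: seg_l.
have [t1 [h1 [a1 [b1 c1]]]] := seg_mem m1.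
have m2 : segment p q q' by rewrite E; apply: seg_r.
have [t2 [h2 [a2 [b2 c2]]]] := seg_mem m2.
have m3 : segment p' q' p by rewrite -E; apply: seg_l.
have [t3 [h3 [a3 [b3 c3]]]] := seg_mem m3.
have m4 : segment p' q' q by rewrite -E; apply: seg_r.
have [t4 [h4 [a4 [b4 c4]]]] := seg_mem m4.
apply: vecP; rewrite !crd; apply: real_mid.
all: try (by exists t1); try (by exists t2); try (by exists t3); try (by exists t4).
Qed.

Lemma sigma_mid_eq s phi (eta : R * R) (p q : V) :
  Sigma s phi eta = segment p q -> sigma_mid s phi eta = 2^-1 *: (p + q).
Proof.
move=> E; rewrite /sigma_mid; apply: xget_unique.
  by exists p, q.
by move=> _ [p' [q' [E' ->]]]; rewrite -(seg_mid (etrans (esym E') E)).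
Qed.

End H5.

Section H6.
Variable R : realType.
Local Notation V := 'cV[R]_3.
Local Notation lift := Defs.lift.

Lemma phi_of_add (F G : R * R -> R * R) z :
  phi_of (fun z => add2 (F z) (G z)) z = phi_of F z + phi_of G z.
Proof. rewrite /phi_of /add2 /=; ring. Qed.

Lemma phi_of_Lambda (v : V) (z : R * R) : S1 z -> phi_of (Lambda v) z = mink (lift z) v.
Proof.
rewrite /S1 => hz; rewrite /phi_of /Lambda /dPi /mink /mcross !crd ?crdl !expr1n !divr1 /=.
apply/eqP; rewrite -subr_eq0; apply/eqP.
transitivity (- x0 v * (z.1 ^+ 2 + z.2 ^+ 2 - 1)); first ring.
by rewrite hz subrr mulr0.
Qed.


Lemma phi_of_push (A : 'M[R]_3) (phi : R * R -> R) (z : R * R) :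
  Lor A -> \det A = 1 -> S1 z ->
  phi_of (push A (vf_of_phi phi)) z = x0 (invmx A *m lift z) * phi (act (invmx A) z).
Proof.
move=> LA dA hz; have [isoA [uA _]] := LA.
have LB := Lor_inv LA.
set B := invmx A.
set e := act B z.
have he : S1 e by apply: act_S1.
have nup : 0 < x0 (B *m lift z) by apply: Lor_pos LB (S1_disk hz).
set nu := x0 (B *m lift z).
set u : V := v3 0 (- e.2) e.1.
have hv : v3 0 (vf_of_phi phi e).1 (vf_of_phi phi e).2 = phi e *: u.
  apply: vecP; rewrite /vf_of_phi /u !crd /=; ring.
have hBl : B *m lift z = nu *: lift e by apply: liftPi; apply: lt0r_neq0.
have hl : lift z = nu *: (A *m lift e).
  by rewrite scalemxAr -hBl mulKVmx.
have hAl : A *m lift e = nu^-1 *: lift z.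
  by rewrite hl scalerA mulVf ?lt0r_neq0 // scale1r.
have hc : mcross (lift e) u = - lift e.
  move: he; rewrite /S1 => he.
  apply: vecP; rewrite /mcross /u !crd ?crdl; last 2 first.
  - ring.
  - ring.
  rewrite -he; ring.
have hw : mcross (lift z) (A *m u) = - lift z.
  rewrite {1}hl mcrossZl -mcross_equiv // hc mulmxN scalerN -hl //.
have h0 := f_equal (@x0 R) hw.
rewrite x0N x0_lift /mcross x0_v3 !x1_lift !x2_lift in h0.
rewrite /phi_of /push -/B -/e /dact hv -scalemxAr hAl.
rewrite /dPi !crd ?crdl /=.
set w := A *m u.
transitivity (nu * phi e * (z.1 * x2 w - z.2 * x1 w)).
  field; exact: lt0r_neq0.
have -> : z.1 * x2 w - z.2 * x1 w = 1 by lra.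
by rewrite mulr1.
Qed.

End H6.

Close Scope classical_set_scope.
Unset Implicit Arguments.

Theorem lemma4p7 (R : realType) (s : bool) (phi : R * R -> R)
    (A : 'M[R]_3) (v : 'cV[R]_3) :
  E_defined s phi -> O0 A ->
  let Y := fun z => add2 (push A (vf_of_phi phi) z) (Lambda v z) in
  E_defined s (phi_of Y) /\ E_defined s (phi_of (Lambda v)) /\
  forall eta, D2 eta ->
    E s (phi_of Y) eta = add2 (push A (E s phi) eta) (E s (phi_of (Lambda v)) eta).
Proof.
move=> Edef O0A Y.
have LA := O0_Lor O0A; have [_ [dA _]] := O0A.
have LB := Lor_inv LA.
have hY : forall z, S1 z -> phi_of Y z =
    x0 (invmx A *m Defs.lift z) * phi (act (invmx A) z) + mink (Defs.lift z) v.
  move=> z hz; rewrite /Y (phi_of_add (push A (vf_of_phi phi)) (Lambda v)).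
  by rewrite phi_of_push // phi_of_Lambda.
have hL : forall z, S1 z -> phi_of (Lambda v) z =
    x0 (invmx 1 *m Defs.lift z) * (fun _ => 0) (act (invmx 1) z) + mink (Defs.lift z) v.
  by move=> z hz; rewrite mulr0 add0r phi_of_Lambda.
have SY := Sigma_transfer LA hY.
have SL : forall eta, D2 eta -> Sigma s (phi_of (Lambda v)) eta = [set v]%classic.
  move=> eta heta; rewrite (@Sigma_transfer R 1 v (fun _ => 0) (phi_of (Lambda v)) (Lor1 R) hL) // Sigma0; last by apply: act_D2 => //; apply: Lor_inv; apply: Lor1.
  apply/seteqP; split.
    by move=> _ [t -> <-]; rewrite mulmx0 add0r.
  by move=> _ ->; exists 0 => //; rewrite mulmx0 add0r.
have Sv : forall eta, D2 eta -> Sigma s (phi_of (Lambda v)) eta = segment v v.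
  by move=> eta heta; rewrite seg_pt SL.
have key : forall eta, D2 eta -> exists p q,
    Sigma s phi (act (invmx A) eta) = segment p q /\
    Sigma s (phi_of Y) eta = segment (A *m p + v) (A *m q + v).
  move=> eta heta.
  have [p [q hpq]] := Edef _ (act_D2 LB heta).
  by exists p, q; split => //; rewrite SY // hpq seg_img.
split.
  by move=> eta heta; have [p [q [_ h]]] := key eta heta; exists (A *m p + v), (A *m q + v).
split.
  by move=> eta heta; exists v, v; apply: Sv.
move=> eta heta.
have [p [q [h1 h2]]] := key eta heta.
have m1 := sigma_mid_eq h1.
have m2 := sigma_mid_eq h2.
have m3 := sigma_mid_eq (Sv eta heta).
have eq2 : 2^-1 *: ((A *m p + v) + (A *m q + v)) = A *m (2^-1 *: (p + q)) + v.
  by rewrite -scalemxAr mulmxDr; apply: vecP; rewrite !crd; field.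
have eq3 : 2^-1 *: (v + v) = v by apply: vecP; rewrite !crd; field.
change (Lambda (sigma_mid s (phi_of Y) eta) eta = add2
  (dact A (act (invmx A) eta) (Lambda (sigma_mid s phi (act (invmx A) eta)) (act (invmx A) eta)))
  (Lambda (sigma_mid s (phi_of (Lambda v)) eta) eta)).
rewrite m2 eq2 Lambda_add m3 eq3.
congr add2.
rewrite m1 push_Lambda //; last first.
  by apply: lt0r_neq0; apply: Lor_pos LA (D2_disk (act_D2 LB heta)).
  2: by rewrite act_inv // D2_disk.
by have [] := LA.
Qed.
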